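(* Let $H$ be a discrete group which admits a Sylow $p$-subgroup $S\le H$. Then there is an exact sequence \[1\to Z(H)\to N_H(S)\to\mathrm{Aut}(H,S)\to\mathrm{Out}(H)\to1,\] where $N_H(S)\to\mathrm{Aut}(H,S)$ sends $h$ to conjugation $c_h$ and $\mathrm{Aut}(H,S)\to\mathrm{Out}(H)$ is the restriction of the projection $\mathrm{Aut}(H)\to\mathrm{Out}(H)$.
   Context: A discrete $p$-toral group is a group containing a normal subgroup isomorphic to $(\mathbb{Z}/p^\infty)^r$ of finite $p$-power index. For a discrete group $H$, a discrete $p$-toral subgroup $S\le H$ is a Sylow $p$-subgroup of $H$ if every discrete $p$-toral subgroup of $H$ is $H$-conjugate to a subgroup of $S$. $\mathrm{Aut}(H,S)$ denotes the group of automorphisms of $H$ mapping $S$ onto $S$. *)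

(* Defs.v *)
From HB Require Import structures.
From mathcomp Require Import all_boot all_order all_algebra.
Set Implicit Arguments. Unset Strict Implicit. Unset Printing Implicit Defensive.

Record Grp := {
  gcar :> Type;
  gmul : gcar -> gcar -> gcar;
  ginv : gcar -> gcar;
  gone : gcar;
  gmulA : forall x y z, gmul x (gmul y z) = gmul (gmul x y) z;
  gmul1 : forall x, gmul gone x = x;
  gmulV : forall x, gmul (ginv x) x = gone
}.

Section GrpDefs.
Variable G : Grp.
Local Notation "x * y" := (gmul x y).
Local Notation "x ^-1" := (ginv x).
Local Notation "1" := (gone G).

Definition is_subgroup (P : G -> Prop) : Prop :=
  P 1 /\ (forall x y, P x -> P y -> P (x * y)) /\ (forall x, P x -> P (x^-1)).

Definition conj (h x : G) : G := h * x * h^-1.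

Definition is_hom (f : G -> G) : Prop := forall x y, f (x * y) = f x * f y.

Definition is_aut (f : G -> G) : Prop :=
  is_hom f /\ (forall x y, f x = f y -> x = y) /\ (forall y, exists x, f x = y).

Definition maps_onto (f : G -> G) (S : G -> Prop) : Prop :=
  (forall x, S x -> S (f x)) /\ (forall y, S y -> exists x, S x /\ f x = y).

Definition is_aut_S (S : G -> Prop) (f : G -> G) : Prop := is_aut f /\ maps_onto f S.

Definition is_inner (f : G -> G) : Prop := exists g, forall x, f x = conj g x.

Definition normalizes (S : G -> Prop) (h : G) : Prop := maps_onto (conj h) S.

Definition central (z : G) : Prop := forall x, z * x = x * z.

Definition p_adic_frac (p : nat) (q : rat) : Prop :=
  exists k : nat, (denq q %| (p ^ k)%N%:Z)%Z.

(* A is isomorphic to (Z/p^oo)^r = (Z[1/p]/Z)^r : there is a homomorphism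
   from Z[1/p]^r onto A whose kernel is exactly Z^r. *)
Definition prufer_power (p r : nat) (A : G -> Prop) : Prop :=
  exists phi : ('I_r -> rat) -> G,
    let D := fun v : 'I_r -> rat => forall i, p_adic_frac p (v i) in
    (forall v, D v -> A (phi v)) /\
    (forall v w, D v -> D w -> phi (fun i => (v i + w i)%R) = phi v * phi w) /\
    (forall a, A a -> exists v, D v /\ phi v = a) /\
    (forall v, D v -> (phi v = 1 <-> forall i, denq (v i) = 1%Z)).

Definition has_index (A P : G -> Prop) (m : nat) : Prop :=
  exists reps : 'I_m -> G,
    (forall i, P (reps i)) /\
    (forall i j, A ((reps i)^-1 * reps j) -> i = j) /\
    (forall x, P x -> exists i, A ((reps i)^-1 * x)).

Definition discrete_p_toral (p : nat) (P : G -> Prop) : Prop :=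
  is_subgroup P /\
  exists (A : G -> Prop) (r n : nat),
    is_subgroup A /\ (forall a, A a -> P a) /\
    (forall x a, P x -> A a -> A (conj x a)) /\
    prufer_power p r A /\ has_index A P (p ^ n).

Definition sylow (p : nat) (S : G -> Prop) : Prop :=
  discrete_p_toral p S /\
  forall P, discrete_p_toral p P ->
    exists h, forall x, P x -> S (conj h x).

End GrpDefs.

(* Main.v *)
Require Import Defs.
From mathcomp Require Import all_boot all_order all_algebra.
From mathcomp Require Import all_fingroup all_solvable.
From Stdlib Require Import Classical ClassicalEpsilon FunctionalExtensionality.
From Stdlib Require List.
From mathcomp Require Import ring.
Set Implicit Arguments. Unset Strict Implicit. Unset Printing Implicit Defensive.
Import GRing.Theory Num.Theory.

Section Basics.
Variable G : Grp.
Local Notation "x ⋅ y" := (@gmul G x y) (at level 40, left associativity).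
Local Notation "1" := (gone G).
Local Notation inv := (@ginv G).

Lemma mulgV' (x : G) : x ⋅ inv x = 1.
Proof.
rewrite -[x ⋅ inv x]gmul1 -{1}(gmulV (inv x)) -gmulA [inv x ⋅ (x ⋅ _)]gmulA gmulV gmul1.
exact: gmulV.
Qed.
Lemma mulg1' (x : G) : x ⋅ 1 = x.
Proof. by rewrite -(gmulV x) gmulA mulgV' gmul1. Qed.
Lemma mulKg' (x y : G) : inv x ⋅ (x ⋅ y) = y.
Proof. by rewrite gmulA gmulV gmul1. Qed.
Lemma mulKVg' (x y : G) : x ⋅ (inv x ⋅ y) = y.
Proof. by rewrite gmulA mulgV' gmul1. Qed.
Lemma mulgK' (x y : G) : x ⋅ y ⋅ inv y = x.
Proof. by rewrite -gmulA mulgV' mulg1'. Qed.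
Lemma mulgKV' (x y : G) : x ⋅ inv y ⋅ y = x.
Proof. by rewrite -gmulA gmulV mulg1'. Qed.
Lemma mulg_canl (x y z : G) : x ⋅ y = x ⋅ z -> y = z.
Proof. by move=> h; rewrite -(mulKg' x y) h mulKg'. Qed.
Lemma mulg_canr (x y z : G) : y ⋅ x = z ⋅ x -> y = z.
Proof. by move=> h; rewrite -(mulgK' y x) h mulgK'. Qed.
Lemma invgK' (x : G) : inv (inv x) = x.
Proof. by apply: (@mulg_canl (inv x)); rewrite mulgV' gmulV. Qed.
Lemma invMg' (x y : G) : inv (x ⋅ y) = inv y ⋅ inv x.
Proof. by apply: (@mulg_canl (x ⋅ y)); rewrite mulgV' -gmulA mulKVg' mulgV'. Qed.
Lemma inv1' : inv 1 = 1.
Proof. by rewrite -[inv 1]mulg1' gmulV. Qed.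
Lemma inv_eq (x y : G) : x ⋅ y = 1 -> inv x = y.
Proof. by move=> h; apply: (@mulg_canl x); rewrite mulgV' h. Qed.

Fixpoint gpow (x : G) (n : nat) : G := if n is n'.+1 then x ⋅ gpow x n' else 1.

Lemma gpowD x m n : gpow x (m + n) = gpow x m ⋅ gpow x n.
Proof. by elim: m => [|m IH] /=; rewrite ?gmul1 // IH gmulA. Qed.
Lemma gpowM x m n : gpow x (m * n) = gpow (gpow x m) n.
Proof. elim: n => [|n IH]; first by rewrite muln0. by rewrite mulnS gpowD IH. Qed.

Lemma hom1 (f : G -> G) : is_hom f -> f 1 = 1.
Proof. by move=> hf; apply: (@mulg_canl (f 1)); rewrite -hf !mulg1'. Qed.
Lemma homV (f : G -> G) x : is_hom f -> f (inv x) = inv (f x).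
Proof. by move=> hf; apply/esym/inv_eq; rewrite -hf mulgV' hom1. Qed.
Lemma homX (f : G -> G) x n : is_hom f -> f (gpow x n) = gpow (f x) n.
Proof. by move=> hf; elim: n => [|n IH] /=; rewrite ?hom1 // hf IH. Qed.
Lemma homJ (f : G -> G) x y : is_hom f -> f (conj x y) = conj (f x) (f y).
Proof. by move=> hf; rewrite /conj !hf homV. Qed.

Lemma subgX (P : G -> Prop) x n : is_subgroup P -> P x -> P (gpow x n).
Proof. by case=> [h1 [hM _]] hx; elim: n => [|n IH] //=; apply: hM. Qed.

End Basics.

Lemma dedup_list (T : Type) (X : T -> Prop) (l : list T) :
  exists l', List.NoDup l' /\ forall x, List.In x l' <-> (List.In x l /\ X x).
Proof.
elim: l => [|a l [l' [nd hl']]].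
  by exists nil; split; [constructor | move=> x; simpl; tauto].
case: (classic (X a /\ ~ List.In a l')) => [[Xa na]|h].
  exists (a :: l'); split; first by constructor.
  move=> x /=; rewrite hl'; split.
    by case=> [<-|[]]; tauto.
  by case=> [[<-|]]; tauto.
exists l'; split => // x; rewrite hl' /=; split; first tauto.
case=> [[ax|inl] Xx]; last by split.
subst x; case: (classic (List.In a l')) => [/hl'|nx]; first tauto.
by exfalso; apply: h.
Qed.

Lemma fin_inj_surj (T : Type) (X : T -> Prop) (l : list T) (f : T -> T) :
  (forall x, X x -> List.In x l) -> (forall x, X x -> X (f x)) ->
  (forall x y, X x -> X y -> f x = f y -> x = y) ->
  forall y, X y -> exists x, X x /\ f x = y.
Proof.
move=> hl hX hinj y Xy.
have [l' [nd hl']] := dedup_list X l.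
have hX' x : List.In x l' <-> X x by rewrite hl'; split; [case | move=> h; split; auto].
have nd' : List.NoDup (List.map f l').
  apply: List.NoDup_map_NoDup_ForallPairs => // x z /hX' Xx /hX' Xz; exact: hinj.
have inc : List.incl (List.map f l') l'.
  by move=> z /List.in_map_iff [x [<- /hX' Xx]]; apply/hX'; apply: hX.
have := List.NoDup_length_incl nd' _ inc.
rewrite List.length_map => /(_ (le_n _)) inc'.
have /inc' /List.in_map_iff [x [fx /hX' Xx]] : List.In y l' by apply/hX'.
by exists x.
Qed.

Lemma mem_In (T : eqType) (x : T) (s : seq T) : x \in s -> List.In x s.
Proof. elim: s => //= a s IH; rewrite in_cons => /orP [/eqP ->|/IH]; tauto. Qed.

Section PF.
Variable p : nat.
Hypothesis p_gt0 : (0 < p)%N.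
Local Open Scope ring_scope.

Lemma natz_intr (n : nat) : (n%:Z)%:~R = n%:R :> rat.
Proof. by []. Qed.

Lemma pXn0 k : (p ^ k)%:R != 0 :> rat.
Proof. by rewrite pnatr_eq0 -lt0n expn_gt0 p_gt0. Qed.

Lemma pf_iff q : p_adic_frac p q <-> exists k (z : int), q = z%:~R / (p ^ k)%:R.
Proof.
split.
  case=> k /dvdzP [c hc]; exists k, (numq q * c).
  rewrite -natz_intr hc -{1}(divq_num_den q) !intrM.
  have cn0 : c%:~R != 0 :> rat.
    rewrite intr_eq0; apply/negP => /eqP c0; move: hc; rewrite c0 mul0r => /eqP.
    by rewrite -[0]/(0%:Z) eqz_nat expn_eq0 (negbTE (lt0n_neq0 p_gt0)).
  have dn0 : (denq q)%:~R != 0 :> rat by rewrite intr_eq0 denq_eq0.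
  by field; rewrite dn0 cn0.
case=> k [z ->]; exists k.
set x := _ / _.
have hx : numq x * (p ^ k)%N%:Z = z * denq x.
  apply: (@intr_inj rat); rewrite !intrM natz_intr numqE /x.
  have dn0 : (denq x)%:~R != 0 :> rat by rewrite intr_eq0 denq_eq0.
  have := pXn0 k; move: dn0; rewrite /x => dn0 pn0.
  by field.
have : (denq x %| numq x * (p ^ k)%N%:Z)%Z by rewrite hx dvdz_mull.
rewrite Gauss_dvdzr //.
by rewrite coprimezE coprime_sym coprime_num_den.
Qed.

Lemma pf_add q1 q2 : p_adic_frac p q1 -> p_adic_frac p q2 -> p_adic_frac p (q1 + q2).
Proof.
move=> /pf_iff [k1 [z1 ->]] /pf_iff [k2 [z2 ->]]; apply/pf_iff.
exists (k1 + k2)%N, (z1 * (p ^ k2)%N%:Z + z2 * (p ^ k1)%N%:Z).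
have := pXn0 k1; have := pXn0 k2.
rewrite rmorphD !rmorphM /= !natz_intr !natrX exprD => h2 h1.
by field; rewrite h1 h2.
Qed.

Lemma pf_natmul (n : nat) q : p_adic_frac p q -> p_adic_frac p (n%:R * q).
Proof.
move=> /pf_iff [k [z ->]]; apply/pf_iff; exists k, (n%:Z * z).
by rewrite rmorphM /= natz_intr mulrA.
Qed.

Lemma pf_divp K q : p_adic_frac p q -> p_adic_frac p (q / (p ^ K)%:R).
Proof.
move=> /pf_iff [k [z ->]]; apply/pf_iff; exists (k + K)%N, z.
have := pXn0 k; have := pXn0 K; rewrite !natrX exprD => h2 h1.
by field; rewrite h1 h2.
Qed.

Lemma pf_frac k (z : int) : p_adic_frac p (z%:~R / (p ^ k)%:R).
Proof. by apply/pf_iff; exists k, z. Qed.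

Lemma pf_int (z : int) : p_adic_frac p z%:~R.
Proof. by apply/pf_iff; exists 0%N, z; rewrite expn0 divr1. Qed.

End PF.


Section PG.
Variables (G : Grp) (p r : nat) (A : G -> Prop) (phi : ('I_r -> rat) -> G).
Local Notation "x ⋅ y" := (@gmul G x y) (at level 40, left associativity).
Local Notation gid := (gone G).
Local Notation inv := (@ginv G).
Hypothesis p_gt0 : (0 < p)%N.
Local Notation D v := (forall i, p_adic_frac p (v i)).
Hypothesis hA : forall v, D v -> A (phi v).
Hypothesis hadd : forall v w, D v -> D w -> phi (fun i => (v i + w i)%R) = phi v ⋅ phi w.
Hypothesis hsurj : forall a, A a -> exists v, D v /\ phi v = a.
Hypothesis hker : forall v, D v -> (phi v = gid <-> forall i, denq (v i) = 1%Z).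
Local Open Scope ring_scope.

Lemma phi_ext (v w : 'I_r -> rat) : (forall i, v i = w i) -> phi v = phi w.
Proof. by move=> h; congr phi; apply: functional_extensionality. Qed.

Lemma phi_int (v : 'I_r -> rat) : D v -> (forall i, exists z : int, v i = z%:~R) -> phi v = gid.
Proof. by move=> Dv h; apply/hker => // i; have [z ->] := h i; apply: denq_int. Qed.

Lemma phi_pow n (v : 'I_r -> rat) : D v -> gpow (phi v) n = phi (fun i => n%:R * v i).
Proof.
move=> Dv; elim: n => [|n IH] /=.
  apply/esym/phi_int => [i|i]; first exact: pf_natmul.
  by exists 0; rewrite mul0r.
rewrite IH -hadd //; last by move=> i; apply: pf_natmul.
by apply: phi_ext => i; rewrite -add1n natrD mulrDl mul1r.
Qed.

Lemma D_bound (v : 'I_r -> rat) : D v -> exists t, forall i, exists z : int, v i = z%:~R / (p ^ t)%:R.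
Proof.
move=> Dv.
have hk i : exists k, exists z : int, v i = z%:~R / (p ^ k)%:R by apply/(pf_iff p_gt0).
pose kf i := proj1_sig (constructive_indefinite_description _ (hk i)).
have hkf i : exists z : int, v i = z%:~R / (p ^ kf i)%:R.
  exact: (proj2_sig (constructive_indefinite_description _ (hk i))).
exists (\max_i kf i)%N => i.
have [z ->] := hkf i.
have le := @leq_bigmax _ kf i.
exists (z * (p ^ ((\max_i kf i) - kf i))%N%:Z).
rewrite -{2}(subnKC le) expnD rmorphM /= natz_intr natrM.
move: (pXn0 p_gt0 (kf i)) (pXn0 p_gt0 ((\max_i kf i) - kf i)).
move: ((p ^ kf i)%:R) ((p ^ (\max_i kf i - kf i))%:R) => a b ha hb.
by field; rewrite ha hb.
Qed.

Lemma tors a : A a -> exists t, gpow a (p ^ t) = gid.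
Proof.
move=> /hsurj [v [Dv <-]]; have [t ht] := D_bound Dv.
exists t; rewrite phi_pow //; apply: phi_int => i.
  exact: pf_natmul.
have [z ->] := ht i; exists z.
by have := pXn0 p_gt0 t => h; field.
Qed.

Lemma divis a K : A a -> exists b, A b /\ a = gpow b (p ^ K).
Proof.
move=> /hsurj [v [Dv <-]].
have Dw : D (fun i => v i / (p ^ K)%:R) by move=> i; apply: pf_divp.
exists (phi (fun i => v i / (p ^ K)%:R)); split; first exact: hA.
rewrite phi_pow //; apply: phi_ext => i.
by have := pXn0 p_gt0 K => h; field.
Qed.

Lemma mod_decomp (d : nat) (z : int) : (0 < d)%N ->
  exists (e : 'I_d) (w : int), z = (e : nat)%:Z + w * d%:Z.
Proof.
move=> d0.
have dz : (0 < d%:Z) by rewrite ltz_nat.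
have hge := modz_ge0 z (lt0r_neq0 dz).
have hlt : (`|(z %% d%:Z)%Z|%N < d)%N.
  by rewrite -ltz_nat gez0_abs // ltz_pmod.
exists (Ordinal hlt), (z %/ d%:Z)%Z => /=.
by rewrite gez0_abs // addrC -divz_eq.
Qed.

Lemma fin_layer t : exists l : list G,
  forall c, A c -> gpow c (p ^ t) = gid -> List.In c l.
Proof.
have pt0 : (0 < p ^ t)%N by rewrite expn_gt0 p_gt0.
pose E (e : {ffun 'I_r -> 'I_(p ^ t)}) := phi (fun i => ((e i : nat)%:R / (p ^ t)%:R)).
exists (List.map E (enum {ffun 'I_r -> 'I_(p ^ t)})).
move=> c /hsurj [v [Dv <-]].
rewrite phi_pow // => /hker hk.
have Dv' : D (fun i => (p ^ t)%:R * v i) by move=> i; apply: pf_natmul.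
have {}hk := hk Dv'.
have hz i : exists (e : 'I_(p ^ t)) (w : int), v i = (e : nat)%:R / (p ^ t)%:R + w%:~R.
  have [e [w hw]] := mod_decomp (numq ((p ^ t)%:R * v i)) pt0.
  exists e, w.
  have := divq_num_den ((p ^ t)%:R * v i); rewrite hk hw divr1.
  rewrite rmorphD rmorphM /= !natz_intr.
  have := pXn0 p_gt0 t => h1 h2.
  apply: (@mulfI _ ((p ^ t)%:R)) => //; rewrite -h2.
  move: ((p ^ t)%:R) h1 => a ha; by field.
pose ef i := proj1_sig (constructive_indefinite_description _ (hz i)).
have hef i : exists w : int, v i = (ef i : nat)%:R / (p ^ t)%:R + w%:~R.
  exact: (proj2_sig (constructive_indefinite_description _ (hz i))).
pose wf i := proj1_sig (constructive_indefinite_description _ (hef i)).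
have hwf i : v i = (ef i : nat)%:R / (p ^ t)%:R + (wf i)%:~R.
  exact: (proj2_sig (constructive_indefinite_description _ (hef i))).
have -> : phi v = E [ffun i => ef i].
  rewrite (@phi_ext v (fun i => (([ffun i => ef i] i : nat)%:R / (p ^ t)%:R) + (wf i)%:~R)); last first.
    by move=> i; rewrite ffunE hwf.
  rewrite hadd; first last.
  - by move=> i; apply: pf_int.
  - by move=> i; rewrite -natz_intr; apply: pf_frac.
  rewrite [phi (fun i => (wf i)%:~R)]phi_int; first by rewrite mulg1'.
    by move=> i; apply: pf_int.
  by move=> i; exists (wf i).
apply: List.in_map; apply: mem_In; exact: mem_enum.
Qed.

End PG.


Section SG.
Variable G : Grp.
Local Notation "x ⋅ y" := (@gmul G x y) (at level 40, left associativity).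
Local Notation gid := (gone G).
Local Notation inv := (@ginv G).
Variable P : G -> Prop.
Hypothesis hP : is_subgroup P.
Lemma sg1 : P gid. Proof. by case: hP. Qed.
Lemma sgM x y : P x -> P y -> P (x ⋅ y). Proof. by case: hP => _ []; auto. Qed.
Lemma sgV x : P x -> P (inv x). Proof. by case: hP => _ []; auto. Qed.
Lemma sgVM x y : P x -> P y -> P (inv x ⋅ y). Proof. by move=> hx hy; apply: sgM => //; apply: sgV. Qed.
Lemma sgVV x : P (inv x) -> P x. Proof. by move=> h; rewrite -(invgK' x); apply: sgV. Qed.
End SG.

Section Cosets.
Variable G : Grp.
Local Notation "x ⋅ y" := (@gmul G x y) (at level 40, left associativity).
Local Notation gid := (gone G).
Local Notation inv := (@ginv G).
Variables (S A : G -> Prop) (m : nat) (reps : 'I_m -> G).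
Hypotheses (hS : is_subgroup S) (hAs : is_subgroup A) (AS : forall a, A a -> S a).
Hypothesis hrS : forall i, S (reps i).
Hypothesis hrd : forall i j, A (inv (reps i) ⋅ reps j) -> i = j.
Hypothesis hrc : forall x, S x -> exists i, A (inv (reps i) ⋅ x).

Lemma cancel_mid (y b c : G) : inv (y ⋅ b) ⋅ (y ⋅ c) = inv b ⋅ c.
Proof. by rewrite invMg' -gmulA mulKg'. Qed.

Lemma idx_ex y : exists i, S y -> A (inv (reps i) ⋅ y).
Proof.
have [i _] := hrc (sg1 hS).
case: (classic (S y)) => [/hrc [j hj]|ny]; first by exists j.
by exists i.
Qed.

Definition cidx (y : G) : 'I_m :=
  proj1_sig (constructive_indefinite_description _ (idx_ex y)).

Lemma idx_spec y : S y -> A (inv (reps (cidx y)) ⋅ y).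
Proof. exact: (proj2_sig (constructive_indefinite_description _ (idx_ex y))). Qed.

Lemma idx_uniq y i : S y -> A (inv (reps i) ⋅ y) -> cidx y = i.
Proof.
move=> Sy hi; apply: hrd.
have := sgM hAs (idx_spec Sy) (sgV hAs hi).
by rewrite invMg' invgK' !gmulA mulgK'.
Qed.

Definition piF (x : G) (i : 'I_m) : 'I_m :=
  if excluded_middle_informative (S x) then cidx (x ⋅ reps i) else i.

Lemma piF_inj x : injective (piF x).
Proof.
rewrite /piF; case: excluded_middle_informative => /= Sx i j e; last by [].
apply: hrd.
have Si : S (x ⋅ reps i) by apply: sgM.
have Sj : S (x ⋅ reps j) by apply: sgM.
have := sgVM hAs (idx_spec Si) (idx_spec Sj).
rewrite e [inv _ ⋅ (x ⋅ reps i)]gmulA [inv _ ⋅ (x ⋅ reps j)]gmulA cancel_mid; exact.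
Qed.

Definition cpi (x : G) : {perm 'I_m} := perm (@piF_inj x).

Lemma piE x i : S x -> cpi x i = cidx (x ⋅ reps i).
Proof. by move=> Sx; rewrite permE /piF; case: excluded_middle_informative. Qed.

Lemma pi_mul x y : S x -> S y -> cpi (x ⋅ y) = (cpi y * cpi x)%g.
Proof.
move=> Sx Sy; apply/permP => i; rewrite permM !piE //; last exact: sgM.
set j := cidx (y ⋅ reps i).
have Sj : S (x ⋅ reps j) by apply: sgM.
apply: idx_uniq; first by apply: sgM => //; apply: sgM.
have := sgM hAs (idx_spec Sj) (idx_spec (sgM hS Sy (hrS i))).
by rewrite !gmulA mulgK'.
Qed.

Lemma pi1 : cpi gid = 1%g.
Proof.
apply/permP => i; rewrite piE ?perm1; last exact: sg1.
by apply: idx_uniq; rewrite gmul1 //; rewrite gmulV; apply: sg1.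
Qed.

Lemma pi_pow x n : S x -> cpi (gpow x n) = (cpi x ^+ n)%g.
Proof.
move=> Sx; elim: n => [|n IH] /=; first exact: pi1.
by rewrite pi_mul // ?IH ?expgSr //; apply: subgX.
Qed.

Lemma pi_triv x : S x -> cpi x = 1%g -> A x.
Proof.
move=> Sx hx.
have S1 := sg1 hS.
set i0 := cidx gid.
have Ai : A (reps i0) by apply: sgVV; have := idx_spec S1; rewrite mulg1'.
have := piE i0 Sx; rewrite hx perm1 => e.
have := idx_spec (sgM hS Sx (hrS i0)); rewrite -e => h.
have -> : x = reps i0 ⋅ (inv (reps i0) ⋅ (x ⋅ reps i0)) ⋅ inv (reps i0).
  by rewrite mulKVg' mulgK'.
by apply: sgM => //; [apply: sgM | apply: sgV].
Qed.

End Cosets.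


Section Key.
Variable G : Grp.
Local Notation "x ⋅ y" := (@gmul G x y) (at level 40, left associativity).
Local Notation gid := (gone G).
Local Notation inv := (@ginv G).
Variables (S A : G -> Prop) (m p : nat) (reps : 'I_m -> G).
Hypotheses (hS : is_subgroup S) (hAs : is_subgroup A) (AS : forall a, A a -> S a).
Hypothesis hrS : forall i, S (reps i).
Hypothesis hrd : forall i j, A (inv (reps i) ⋅ reps j) -> i = j.
Hypothesis hrc : forall x, S x -> exists i, A (inv (reps i) ⋅ x).
Hypothesis hp : prime p.
Hypothesis tors_h : forall a, A a -> exists t, gpow a (p ^ t) = gid.
Hypothesis div_h : forall a K, A a -> exists b, A b /\ a = gpow b (p ^ K).
Hypothesis fin_h : forall t, exists l : list G,
  forall c, A c -> gpow c (p ^ t) = gid -> List.In c l.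
Variable psi : G -> G.
Hypotheses (hpsi : is_hom psi) (ipsi : forall x y, psi x = psi y -> x = y)
  (Spsi : forall x, S x -> S (psi x)).

Local Notation pi := (cpi hS hAs hrS hrd hrc).
Let pi_pow' := pi_pow hS hAs hrS hrd hrc.
Let pi1' := pi1 hS hAs hrS hrd hrc.
Let pi_triv' := @pi_triv _ _ _ _ _ hS hAs hrS hrd hrc.

Lemma keyA a : A a -> A (psi a).
Proof.
move=> Aa.
have [t ht] := tors_h Aa.
pose M := #|[set: {perm 'I_m}]|.
have [b [Ab hb]] := div_h (logn p M) Aa.
have Sw : S (psi b) by apply/Spsi/AS.
have Sx : S (psi a) by apply/Spsi/AS.
have e1 : (pi (psi a) ^+ (p ^ t) = 1)%g.
  by rewrite -pi_pow' // -homX // ht hom1 // pi1'.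
have e2 : (pi (psi a) ^+ (M`_p^') = 1)%g.
  rewrite hb homX // pi_pow' // -expgM -p_part partnC; last by rewrite cardG_gt0.
  by apply: expg_cardG; rewrite in_setT.
have : ((#[pi (psi a)])%g %| gcdn (p ^ t) (M`_p^'))%N.
  by rewrite dvdn_gcd !order_dvdn e1 e2 !eqxx.
have cop : coprime (p ^ t) (M`_p^').
  apply: pnat_coprime; last exact: part_pnat.
  by rewrite pnatX pnat_id.
rewrite (eqP cop) dvdn1 order_eq1 => /eqP h1.
exact: pi_triv' h1.
Qed.

Lemma keyA' a : A a -> exists c, A c /\ psi c = a.
Proof.
move=> Aa; have [t ht] := tors_h Aa.
have [l hl] := fin_h t.
pose X c := A c /\ gpow c (p ^ t) = gid.
have h1 : forall c, X c -> List.In c l by move=> c [Ac hc]; apply: hl.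
have h2 : forall c, X c -> X (psi c).
  by move=> c [Ac hc]; split; [apply: keyA | rewrite -homX // hc hom1].
have h3 : forall x y, X x -> X y -> psi x = psi y -> x = y by move=> x y _ _; apply: ipsi.
have := @fin_inj_surj G X l psi h1 h2 h3 a (Logic.conj Aa ht).
by case=> c [[Ac _] e]; exists c.
Qed.

Lemma key y : S y -> exists x, S x /\ psi x = y.
Proof.
move=> Sy.
pose sigma i := cidx hS hrc (psi (reps i)).
have sinj : injective sigma.
  move=> i j e; apply: hrd.
  have Si := Spsi (hrS i); have Sj := Spsi (hrS j).
  have := sgVM hAs (idx_spec hS hrc Si) (idx_spec hS hrc Sj).
  rewrite -/(sigma i) -/(sigma j) e invMg' invgK' -gmulA mulKVg'.
  rewrite -homV // -hpsi // => /keyA' [c [Ac hc]].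
  by rewrite -(ipsi hc).
have [g _ gK] := injF_bij sinj.
set j := cidx hS hrc y.
set i := g j.
have hj := idx_spec hS hrc Sy.
have hi := idx_spec hS hrc (Spsi (hrS i)).
rewrite -/(sigma i) /i gK -/j in hi.
have := sgVM hAs hi hj.
rewrite invMg' invgK' -gmulA mulKVg' => /keyA' [c [Ac hc]].
exists (reps i ⋅ c); split; first by apply: sgM => //; apply: AS.
by rewrite hpsi hc mulKVg'.
Qed.

End Key.


Section Main.
Variable G : Grp.
Local Notation "x ⋅ y" := (@gmul G x y) (at level 40, left associativity).
Local Notation gid := (gone G).
Local Notation inv := (@ginv G).

Lemma key_toral p (S : G -> Prop) (psi : G -> G) : prime p -> discrete_p_toral p S ->
  is_hom psi -> (forall x y, psi x = psi y -> x = y) -> (forall x, S x -> S (psi x)) ->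
  forall y, S y -> exists x, S x /\ psi x = y.
Proof.
move=> hp [hS [A [r [n [hAs [AS [hN [hpr [reps [hrS [hrd hrc]]]]]]]]]]].
move: hpr => [phi]; cbv zeta => [[hA [hadd [hsurj hker]]]].
have p_gt0 := prime_gt0 hp.
move=> hpsi ipsi Spsi.
apply: (key hS hAs AS hrS hrd hrc hp _ _ _ hpsi ipsi Spsi).
- by move=> a Aa; apply: (tors p_gt0 hadd hsurj hker).
- by move=> a K Aa; apply: (divis p_gt0 hA hadd hsurj hker).
- by move=> t; apply: (fin_layer p_gt0 hadd hsurj hker).
Qed.

Definition img (f : G -> G) (P : G -> Prop) := fun y => exists x, P x /\ f x = y.

Lemma img_subgroup f P : is_hom f -> is_subgroup P -> is_subgroup (img f P).
Proof.
move=> hf hP; split; [|split].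
- by exists gid; split; [apply: sg1 | apply: hom1].
- by move=> _ _ [x [Px <-]] [y [Py <-]]; exists (x ⋅ y); split; [apply: sgM | apply: hf].
- by move=> _ [x [Px <-]]; exists (inv x); split; [apply: sgV | apply: homV].
Qed.

Lemma toral_img p f P : is_hom f -> (forall x y, f x = f y -> x = y) ->
  discrete_p_toral p P -> discrete_p_toral p (img f P).
Proof.
move=> hf fi [hP [A [r [n [hAs [AS [hN [hpr [reps [hrS [hrd hrc]]]]]]]]]]].
move: hpr => [phi]; cbv zeta => [[hA [hadd [hsurj hker]]]].
split; first exact: img_subgroup.
exists (img f A), r, n; split; first exact: img_subgroup.
split; first by move=> _ [a [Aa <-]]; exists a; split; [apply: AS|].
split.
  move=> _ _ [x [Px <-]] [a [Aa <-]]; exists (conj x a); split; first exact: hN.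
  exact: homJ.
split.
  exists (fun v => f (phi v)); cbv zeta; split; [|split; [|split]].
  - by move=> v Dv; exists (phi v); split => //; apply: hA.
  - by move=> v w Dv Dw; rewrite hadd.
  - by move=> _ [a [Aa <-]]; have [v [Dv <-]] := hsurj a Aa; exists v.
  - move=> v Dv; rewrite -hker //; split; last by move=> ->; apply: hom1.
    by move=> e; apply: fi; rewrite e hom1.
exists (fun i => f (reps i)); split; [|split].
- by move=> i; exists (reps i).
- move=> i j [a [Aa e]]; apply: hrd.
  by rewrite -homV // -hf in e; rewrite -(fi _ _ e).
- move=> _ [x [Px <-]]; have [i hi] := hrc x Px; exists i.
  by exists (inv (reps i) ⋅ x); split => //; rewrite hf homV.
Qed.

End Main.

Unset Implicit Arguments.

Theorem lemma3p1 (H : Grp) (p : nat) (S : H -> Prop)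
  (hp : prime p) (hS : sylow p S) :
  (forall z : H, central z -> normalizes S z) /\
  (forall h : H, normalizes S h -> is_aut_S S (conj h)) /\
  (forall h k x : H, conj (gmul h k) x = conj h (conj k x)) /\
  (forall h : H, normalizes S h -> ((forall x, conj h x = x) <-> central h)) /\
  (forall f : H -> H, is_aut_S S f ->
     (is_inner f <-> exists h, normalizes S h /\ forall x, f x = conj h x)) /\
  (forall f : H -> H, is_aut f ->
     exists g, is_aut_S S g /\ exists h, forall x, f x = conj h (g x)).
Proof.
have conjM (h k x : H) : conj (gmul h k) x = conj h (conj k x).
  by rewrite /conj invMg' !gmulA.
have conj_hom (h : H) : is_hom (conj h).
  by move=> x y; rewrite /conj !gmulA mulgKV'.
have conj_inj (h : H) x y : conj h x = conj h y -> x = y.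
  rewrite /conj => e; apply: (@mulg_canl _ h); exact: mulg_canr e.
have conjK (h x : H) : conj h (conj (ginv h) x) = x.
  by rewrite -conjM mulgV' /conj gmul1 inv1' mulg1'.
have ext_onto (f g : H -> H) : (forall x, f x = g x) -> maps_onto f S -> maps_onto g S.
  move=> e [h1 h2]; split; first by move=> x Sx; rewrite -e; apply: h1.
  by move=> y /h2 [x [Sx <-]]; exists x; rewrite e.
split.
  move=> z cz; have e x : conj z x = x by rewrite /conj cz mulgK'.
  split; first by move=> x Sx; rewrite e.
  by move=> y Sy; exists y; rewrite e.
split.
  move=> h nh; split => //; split; first exact: conj_hom.
  split; first exact: conj_inj.
  by move=> y; exists (conj (ginv h) y); apply: conjK.
split; first exact: conjM.
split.
  move=> h _; split.
    by move=> e x; rewrite -{2}(e x) /conj mulgKV'.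
  by move=> cz x; rewrite /conj cz mulgK'.
split.
  move=> f [af mf]; split.
    case=> g e; exists g; split => //; exact: ext_onto e mf.
  by case=> h [_ e]; exists h.
move=> f [hf [fi fs]].
case: hS => hT hsyl.
have [h1 hh1] := hsyl _ (toral_img hf fi hT).
pose g x := conj h1 (f x).
have hg : is_hom g by move=> x y; rewrite /g hf conj_hom.
have gi : forall x y, g x = g y -> x = y by move=> x y /conj_inj /fi.
have gS : forall x, S x -> S (g x) by move=> x Sx; apply: hh1; exists x.
exists g; split.
  split; last by split => //; apply: (key_toral hp hT hg gi gS).
  split => //; split => // y.
  have [x e] := fs (conj (ginv h1) y); exists x.
  by rewrite /g e conjK.
exists (ginv h1) => x; by rewrite /g -conjM gmulV /conj gmul1 inv1' mulg1'.
Qed.
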